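(* The essential set of a polyomino $A$ is empty if and only if $A$ has a SE-source.
   Context: A $(0,1)$-matrix is convex if in every row and every column the 1's occur consecutively; it is connected if it has no zero row or column and any two 1's are joined by a path of 1's with consecutive ones horizontally or vertically adjacent. A polyomino is a connected convex $(0,1)$-matrix. A SE-source of a $(0,1)$-matrix is a 1 from which every other 1 can be reached by a path of 1's in which each step goes from a 1 to the horizontally adjacent 1 to its east or the vertically adjacent 1 to its south. The diagram of an $m\times n$ $(0,1)$-matrix $A$: for each 1 of $A$ at $(i,j)$ shade all positions $(i,j')$, $j'\ge j$, and $(i',j)$, $i'\ge i$; the diagram is the set of unshaded positions. The essential set is the set of positions $(i,j)$ of the diagram such that neither $(i+1,j)$ nor $(i,j+1)$ lies in the diagram. *)

(* Defs.v *)
From mathcomp Require Import all_boot all_order all_algebra.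
Set Implicit Arguments. Unset Strict Implicit. Unset Printing Implicit Defensive.

Section Polyomino.
Variables (m n : nat).
Implicit Types (A : 'M[bool]_(m, n)).

Definition pos := ('I_m * 'I_n)%type.

Definition one A (p : pos) : bool := A p.1 p.2.

Definition convex A : Prop :=
  (forall (i : 'I_m) (j1 j j2 : 'I_n), j1 <= j <= j2 -> A i j1 -> A i j2 -> A i j) /\
  (forall (j : 'I_n) (i1 i i2 : 'I_m), i1 <= i <= i2 -> A i1 j -> A i2 j -> A i j).

Definition adjacent (p q : pos) : bool :=
  ((p.1 == q.1 :> nat) && ((p.2.+1 == q.2 :> nat) || (q.2.+1 == p.2 :> nat))) ||
  ((p.2 == q.2 :> nat) && ((p.1.+1 == q.1 :> nat) || (q.1.+1 == p.1 :> nat))).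

Definition step1 A : rel pos := fun p q => [&& one A p, one A q & adjacent p q].

Definition connected A : Prop :=
  (forall i : 'I_m, exists j : 'I_n, A i j) /\
  (forall j : 'I_n, exists i : 'I_m, A i j) /\
  (forall p q : pos, one A p -> one A q -> connect (step1 A) p q).

Definition polyomino A : Prop :=
  convex A /\ connected A /\ exists p : pos, one A p.

Definition se_step A : rel pos := fun p q =>
  [&& one A p, one A q &
     ((p.1 == q.1 :> nat) && (p.2.+1 == q.2 :> nat)) ||
     ((p.2 == q.2 :> nat) && (p.1.+1 == q.1 :> nat))].

Definition is_SE_source A (s : pos) : Prop :=
  one A s /\ forall p : pos, one A p -> connect (se_step A) s p.

Definition has_SE_source A : Prop := exists s : pos, is_SE_source A s.

Definition shaded A (i j : nat) : bool :=
  [exists i' : 'I_m, exists j' : 'I_n,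
     A i' j' && (((i' == i :> nat) && (j' <= j)) || ((j' == j :> nat) && (i' <= i)))].

Definition in_diagram A (i j : nat) : bool := [&& i < m, j < n & ~~ shaded A i j].

Definition diagram A : {set pos} := [set p : pos | in_diagram A p.1 p.2].

Definition essential_set A : {set pos} :=
  [set p : pos | [&& in_diagram A p.1 p.2, ~~ in_diagram A p.1.+1 p.2
                   & ~~ in_diagram A p.1 p.2.+1]].

End Polyomino.

(* Main.v *)
Require Import Defs.
From mathcomp Require Import all_boot all_order all_algebra.
From mathcomp Require Import zify.

Set Implicit Arguments. Unset Strict Implicit. Unset Printing Implicit Defensive.
Local Notation onee := Defs.one.

Lemma connect_inv (T : finType) (e : rel T) (P : pred T) x y :
  (forall a b, P a -> e a b -> P b) -> P x -> connect e x y -> P y.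
Proof.
move=> H Px /connectP [p pth ->]; elim: p x Px pth => //= z p IH x Px /andP [exz pth].
exact: IH (H _ _ Px exz) pth.
Qed.

Section S.
Variables (m n : nat) (A : 'M[bool]_(m, n)).

Definition B (i j : nat) := [exists i' : 'I_m, exists j' : 'I_n,
  [&& (i' == i :> nat), (j' == j :> nat) & A i' j']].

Lemma BE (i : 'I_m) (j : 'I_n) : B i j = A i j.
Proof.
apply/existsP/idP => [[i' /existsP [j' /and3P [/eqP e1 /eqP e2 a]]]|a].
  have -> : i = i' by apply: val_inj.
  have -> : j = j' by apply: val_inj.
  done.
by exists i; apply/existsP; exists j; rewrite !eqxx a.
Qed.

Lemma Bb i j : B i j -> i < m /\ j < n.
Proof. by case/existsP => i' /existsP [j' /and3P [/eqP <- /eqP <- _]]. Qed.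

Lemma Bpos (p : pos m n) : onee A p = B p.1 p.2.
Proof. by rewrite BE. Qed.

Lemma rowconv : convex A -> forall i j1 j j2, B i j1 -> B i j2 -> j1 <= j <= j2 -> B i j.
Proof.
move=> hc i j1 j j2 h1 h2 hj.
have [Hi Hj1] := Bb h1. have [_ Hj2] := Bb h2.
have Hj : j < n by lia.
have -> : B i j = A (Ordinal Hi) (Ordinal Hj) by rewrite -BE.
have e1 : B i j1 = A (Ordinal Hi) (Ordinal Hj1) by rewrite -BE.
have e2 : B i j2 = A (Ordinal Hi) (Ordinal Hj2) by rewrite -BE.
rewrite e1 in h1; rewrite e2 in h2.
by apply: hc.1 (Ordinal Hi) (Ordinal Hj1) (Ordinal Hj) (Ordinal Hj2) _ h1 h2.
Qed.

Lemma colconv : convex A -> forall j i1 i i2, B i1 j -> B i2 j -> i1 <= i <= i2 -> B i j.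
Proof.
move=> hc j i1 i i2 h1 h2 hi.
have [Hi1 Hj] := Bb h1. have [Hi2 _] := Bb h2.
have Hi : i < m by lia.
have -> : B i j = A (Ordinal Hi) (Ordinal Hj) by rewrite -BE.
have e1 : B i1 j = A (Ordinal Hi1) (Ordinal Hj) by rewrite -BE.
have e2 : B i2 j = A (Ordinal Hi2) (Ordinal Hj) by rewrite -BE.
rewrite e1 in h1; rewrite e2 in h2.
by apply: hc.2 (Ordinal Hj) (Ordinal Hi1) (Ordinal Hi) (Ordinal Hi2) _ h1 h2.
Qed.

Lemma shadedB i j : shaded A i j -> exists i' j', B i' j' /\
  ((i' = i /\ j' <= j) \/ (j' = j /\ i' <= i)).
Proof.
case/existsP => i' /existsP [j' /andP [a h]].
exists i', j'; split; first by rewrite BE.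
by case/orP: h => /andP [/eqP -> ->]; [left|right].
Qed.

Lemma shadedI (i' : 'I_m) (j' : 'I_n) i j : A i' j' ->
  ((i' == i :> nat) && (j' <= j)) || ((j' == j :> nat) && (i' <= i)) -> shaded A i j.
Proof. by move=> a h; apply/existsP; exists i'; apply/existsP; exists j'; rewrite a. Qed.

Lemma ess0_shaded : essential_set A = set0 -> forall i j, i < m -> j < n -> shaded A i j.
Proof.
move=> E.
suff H : forall k i j, (m - i) + (n - j) <= k -> ~~ in_diagram A i j.
  move=> i j Hi Hj; have := H _ i j (leqnn _).
  by rewrite /in_diagram Hi Hj /= negbK.
elim=> [|k IH] i j hk; apply/negP => D; have /and3P [Hi Hj _] := D.
  lia.
case: (boolP (in_diagram A i.+1 j)) => D1.
  by move: D1; apply/negP; apply: IH; lia.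
case: (boolP (in_diagram A i j.+1)) => D2.
  by move: D2; apply/negP; apply: IH; lia.
have : (Ordinal Hi, Ordinal Hj) \in essential_set A by rewrite inE /= D D1 D2.
by rewrite E inE.
Qed.

Lemma mono (x y : pos m n) : connect (se_step A) x y -> (x.1 <= y.1) && (x.2 <= y.2).
Proof.
apply: (connect_inv (P := fun q : pos m n => (x.1 <= q.1) && (x.2 <= q.2))); last by rewrite !leqnn.
move=> a b /andP [h1 h2] /and3P [_ _ /orP [] /andP [/eqP e1 /eqP e2]]; apply/andP; lia.
Qed.

Lemma cross (x y : pos m n) (j : nat) : connect (se_step A) x y -> x.2 <= j < y.2 ->
  exists z : pos m n, [/\ onee A z, z.2 = j :> nat & z.1 <= y.1].
Proof.
move=> c; have := c; move/connectP => [p pth ey]; rewrite ey in c *.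
elim: p x pth c {ey} => [|[z1 z2] p IH] x /=.
  move=> _ _ /andP [h1 h2]; exfalso; lia.
move=> /andP [sxz pth] c hj.
case: (eqVneq (x.2 : nat) j) => ej.
  exists x; split => //; first by case/and3P: sxz.
  by case/andP: (mono c).
have /and3P [_ _ hz] := sxz.
apply: (IH (z1, z2) pth).
  by apply/connectP; exists p.
move: hz hj ej => /orP [] /andP [/eqP e1 /eqP e2] /= hj /eqP ej; apply/andP; split; simpl in *; lia.
Qed.

Lemma clos_lemma (hc : convex A) i j r1 c2 : 0 < i -> 0 < j -> r1 < i -> B r1 j.-1 ->
  c2 < j -> B i.-1 c2 -> ~~ B i j.-1 -> ~~ B i.-1 j ->
  forall a b : pos m n, (i <= a.1) && (j <= a.2) -> step1 A a b -> (i <= b.1) && (j <= b.2).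
Proof.
move=> ip jp r1lt br1' c2lt br2' bl bu.
    move=> a b /andP [ha1 ha2] /and3P [oa ob].
    rewrite !Bpos in oa ob.
    case/orP => /andP [/eqP e1 /orP [] /eqP e2].
    + apply/andP; lia.
    + case: (leqP j b.2) => hb; first by apply/andP; lia.
      have eb : (b.2 : nat) = j.-1 by lia.
      rewrite eb in ob.
      case: (eqVneq (b.1 : nat) i) => ea.
        by move: bl; rewrite -ea ob.
      by move: bl; rewrite (colconv hc br1' ob) //; lia.
    + apply/andP; lia.
    + case: (leqP i b.1) => hb; first by apply/andP; lia.
      have eb : (b.1 : nat) = i.-1 by lia.
      rewrite eb in ob.
      case: (eqVneq (b.2 : nat) j) => ea.
        by move: bu; rewrite -ea ob.
      by move: bu; rewrite (rowconv hc br2' ob) //; lia.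
Qed.

End S.

Theorem mainTheorem3 (m n : nat) (A : 'M[bool]_(m, n)) :
  polyomino A -> (essential_set A = set0 <-> has_SE_source A).
Proof.
move=> [hc [[hrow [hcol hconn]] [p0 hp0]]].
split.
- move=> E.
  have Sh := ess0_shaded E.
  have Hm : 0 < m by case: p0.1 => k; lia.
  have Hn : 0 < n by case: p0.2 => k; lia.
  pose s0 : pos m n := (Ordinal Hm, Ordinal Hn).
  have B00 : B A 0 0.
    have [i' [j' [b h]]] := shadedB (Sh 0 0 Hm Hn).
    have [ei ej] : i' = 0 /\ j' = 0 by lia.
    by rewrite ei ej in b.
  have os0 : onee A s0 by rewrite Bpos.
  have key : forall i j, B A i j -> 0 < i + j ->
      (0 < i /\ B A i.-1 j) \/ (0 < j /\ B A i j.-1).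
    move=> i j bij hij.
    have [Hi Hj] := Bb bij.
    case: (posnP i) => [i0|ip].
      right; split; first lia.
      apply: (rowconv hc (j1 := 0) (j2 := j)); rewrite ?i0 //; last lia.
      by rewrite i0 in bij.
    case: (posnP j) => [j0|jp].
      left; split; first lia.
      apply: (colconv hc (i1 := 0) (i2 := i)); rewrite ?j0 //; last lia.
      by rewrite j0 in bij.
    case: (boolP (B A i.-1 j)) => bu; first by left.
    case: (boolP (B A i j.-1)) => bl; first by right.
    exfalso.
    have [r1 [c' [br1 hr1]]] := shadedB (Sh i j.-1 Hi (leq_ltn_trans (leq_pred j) Hj)).
    have [r1lt br1'] : r1 < i /\ B A r1 j.-1.
      case: hr1 => [[er ec]|[ec er]].
        rewrite er in br1.
        by move: bl; rewrite (rowconv hc br1 bij) //; lia.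
      rewrite ec in br1; split => //.
      case: (ltngtP r1 i) => // e; [lia| by move: bl; rewrite -e br1].
    have [r2 [c2 [br2 hr2]]] := shadedB (Sh i.-1 j (leq_ltn_trans (leq_pred i) Hi) Hj).
    have [c2lt br2'] : c2 < j /\ B A i.-1 c2.
      case: hr2 => [[er ec]|[ec er]].
        rewrite er in br2; split => //.
        case: (ltngtP c2 j) => // e; [lia| by move: bu; rewrite -e br2].
      rewrite ec in br2.
      by move: bu; rewrite (colconv hc br2 bij) //; lia.
    pose p : pos m n := (Ordinal Hi, Ordinal Hj).
    have op : onee A p by rewrite Bpos.
    have Hclos := clos_lemma hc ip jp r1lt br1' c2lt br2' bl bu.
    have := connect_inv (P := fun q : pos m n => (i <= q.1) && (j <= q.2)) Hclos _ (hconn p s0 op os0).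
    rewrite /= !leqnn => /(_ isT) /andP [h1 h2].
    by have := leq_trans ip h1.
  exists s0; split => //.
  suff H : forall k (p : pos m n), p.1 + p.2 <= k -> onee A p -> connect (se_step A) s0 p.
    by move=> p hp; apply: (H _ p (leqnn _) hp).
  elim=> [|k IH] p hk hp.
    have -> : p = s0.
      case: p hk {hp} => [a b] /= hk; congr pair; apply: val_inj => /=; lia.
    exact: connect0.
  case: (posnP (p.1 + p.2)) => h0.
    have -> : p = s0.
      case: p hk hp h0 => [a b] /= hk _ h0; congr pair; apply: val_inj => /=; lia.
    exact: connect0.
  have bp : B A p.1 p.2 by rewrite -Bpos.
  case: (key _ _ bp h0) => [[ip bq]|[jp bq]].
    have Hq : p.1.-1 < m by case: p.1 => /= *; lia.
    pose q : pos m n := (Ordinal Hq, p.2).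
    apply: (connect_trans (IH q _ _)); rewrite /=; first lia; first by rewrite Bpos.
    apply: connect1; rewrite /se_step hp Bpos bq /=; apply/orP; right; apply/andP; split => //; lia.
  have Hq : p.2.-1 < n by case: p.2 => /= *; lia.
  pose q : pos m n := (p.1, Ordinal Hq).
  apply: (connect_trans (IH q _ _)); rewrite /=; first lia; first by rewrite Bpos.
  apply: connect1; rewrite /se_step hp Bpos bq /=; apply/orP; left; apply/andP; split => //; lia.
- move=> [s [os hs]].
  suff Sh : forall i j, i < m -> j < n -> shaded A i j.
    apply/setP => p; rewrite inE in_set0 /in_diagram.
    by rewrite (Sh p.1 p.2 (ltn_ord _) (ltn_ord _)) /= !andbF.
  move=> i j Hi Hj.
  have [j0 a0] := hrow (Ordinal Hi).
  have [i0 a1] := hcol (Ordinal Hj).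
  have /andP [_ hs2] := mono (hs (i0, Ordinal Hj) a1).
  case: (leqP j0 j) => hj0.
    by apply: (shadedI a0); rewrite /= eqxx hj0.
  have [z [oz ez hz]] := cross (hs (Ordinal Hi, j0) a0) (j := j) (ltac:(simpl in *; lia)).
  by apply: (shadedI oz); rewrite ez eqxx hz orbT.
Qed.
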